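(* Let $B$ be an integral domain of characteristic zero, $n\ge3$, $x_1,\dots,x_n\in B$ and $a_1,\dots,a_n$ positive integers. Assume (i) $x_1^{a_1}+\cdots+x_n^{a_n}=0$; (ii) $\sum_{i=1}^n\frac1{a_i}\le\frac1{n-2}$; (iii) $x_1,\dots,x_n$ are pairwise relatively prime in $B$. Then $x_1,\dots,x_n\in\mathrm{ML}(R)$ in each of the following cases: (a) $R$ is a factorially closed subring of $B$ with $x_1,\dots,x_n\in R$; (b) $R=B^{[N]}$ (a polynomial ring in $N$ variables over $B$) for some $N\ge0$. Moreover, $x_1,\dots,x_n$ belong to the rigid core of $B$.
   Context: Two elements $x,y$ of a domain $B$ are relatively prime if $xB\cap yB=xyB$ and, if $0\in\{x,y\}$, then one of $x,y$ is a unit of $B$. A subring $A$ of a domain $B$ is factorially closed if for all nonzero $x,y\in B$, $xy\in A$ implies $x,y\in A$. For a domain $R$ of characteristic zero, $\mathrm{ML}(R)=\bigcap_{D}\ker D$ over all locally nilpotent derivations $D:R\to R$ (derivations such that each element is killed by some power of $D$). The rigid core of $B$ is $\bigcap_{i\ge0}\mathrm{ML}_i(B)$ where $\mathrm{ML}_0(B)=B$ and $\mathrm{ML}_{i+1}(B)=\mathrm{ML}(\mathrm{ML}_i(B))$. *)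

(* Defs.v *)
From HB Require Import structures.
From mathcomp Require Import all_boot all_order all_algebra.
From mathcomp Require Export mpoly.
Set Implicit Arguments. Unset Strict Implicit. Unset Printing Implicit Defensive.
Import GRing.Theory.
Local Open Scope ring_scope.

Definition is_subring (B : comNzRingType) (A : B -> Prop) : Prop :=
  [/\ A 0, A 1,
      (forall x y, A x -> A y -> A (x - y)) &
      (forall x y, A x -> A y -> A (x * y))].

Definition factorially_closed (B : comNzRingType) (A : B -> Prop) : Prop :=
  forall x y : B, x != 0 -> y != 0 -> A (x * y) -> A x /\ A y.

Definition is_LND_on (B : comNzRingType) (A : B -> Prop) (D : B -> B) : Prop :=
  [/\ (forall x, A x -> A (D x)),
      (forall x y, A x -> A y -> D (x + y) = D x + D y),
      (forall x y, A x -> A y -> D (x * y) = x * D y + y * D x) &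
      (forall x, A x -> exists m : nat, iter m D x = 0)].

Definition ML_on (B : comNzRingType) (A : B -> Prop) : B -> Prop :=
  fun x => A x /\ forall D : B -> B, is_LND_on A D -> D x = 0.

Definition ML (R : comNzRingType) : R -> Prop := ML_on (fun _ : R => True).

Fixpoint ML_iter (B : comNzRingType) (i : nat) : B -> Prop :=
  match i with
  | 0 => fun _ => True
  | i'.+1 => ML_on (@ML_iter B i')
  end.

Definition rigid_core (B : comNzRingType) : B -> Prop :=
  fun x => forall i : nat, @ML_iter B i x.

Definition rel_prime (B : comUnitRingType) (x y : B) : Prop :=
  (forall z : B, ((exists u, z = x * u) /\ (exists v, z = y * v))
                 <-> exists w, z = x * y * w)
  /\ ((x = 0 \/ y = 0) -> (x \is a GRing.unit \/ y \is a GRing.unit)).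

(* Main.v *)
Require Import Defs.
From HB Require Import structures.
From mathcomp Require Import all_boot all_order all_algebra.
From mathcomp Require Import mpoly.
From mathcomp Require Import perm ring zify.
From Stdlib Require Import ClassicalEpsilon.
Set Implicit Arguments. Unset Strict Implicit. Unset Printing Implicit Defensive.
Import Order.TTheory GRing.Theory Num.Theory.
Local Open Scope ring_scope.

Section Basics.
Variable B : idomainType.
Variable R : B -> Prop.
Hypothesis hR : is_subring R.
Variable D : B -> B.
Hypothesis hD : is_LND_on R D.

Lemma R0 : R 0. Proof. by case: hR. Qed.
Lemma R1 : R 1. Proof. by case: hR. Qed.
Lemma RB x y : R x -> R y -> R (x - y). Proof. by case: hR => _ _ h _; apply: h. Qed.
Lemma RM x y : R x -> R y -> R (x * y). Proof. by case: hR => _ _ _ h; apply: h. Qed.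
Lemma RN x : R x -> R (- x). Proof. by move=> h; rewrite -sub0r; apply: RB => //; apply: R0. Qed.
Lemma RA x y : R x -> R y -> R (x + y).
Proof. by move=> hx hy; rewrite -[y]opprK; apply: RB => //; apply: RN. Qed.
Lemma Rsum (I : Type) (r : seq I) (P : pred I) (F : I -> B) :
  (forall i, P i -> R (F i)) -> R (\sum_(i <- r | P i) F i).
Proof. by move=> h; apply: big_ind => //; [apply: R0 | apply: RA]. Qed.
Lemma Rprod (I : Type) (r : seq I) (P : pred I) (F : I -> B) :
  (forall i, P i -> R (F i)) -> R (\prod_(i <- r | P i) F i).
Proof. by move=> h; apply: big_ind => //; [apply: R1 | apply: RM]. Qed.
Lemma RX x n : R x -> R (x ^+ n).
Proof. by move=> h; elim: n => [|n IH]; rewrite ?expr0 ?exprS; [apply: R1 | apply: RM]. Qed.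
Lemma Rnat n : R n%:R.
Proof. elim: n => [|n IH]; first exact: R0. by rewrite -addn1 natrD; apply: RA => //; apply: R1. Qed.
Lemma RDx x : R x -> R (D x). Proof. by case: hD => h _ _ _; apply: h. Qed.
Lemma Riter n x : R x -> R (iter n D x).
Proof. by move=> h; elim: n => //= n IH; apply: RDx. Qed.
Lemma DA x y : R x -> R y -> D (x + y) = D x + D y. Proof. by case: hD => _ h _ _; apply: h. Qed.
Lemma DM x y : R x -> R y -> D (x * y) = x * D y + y * D x. Proof. by case: hD => _ _ h _; apply: h. Qed.
Lemma Dnil x : R x -> exists m, iter m D x = 0. Proof. by case: hD => _ _ _ h; apply: h. Qed.

Lemma D0 : D 0 = 0.
Proof. have h := DA R0 R0; rewrite addr0 in h. by apply: (addrI (D 0)); rewrite addr0 -h. Qed.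
Lemma iter0 n : iter n D 0 = 0. Proof. by elim: n => //= n ->; apply: D0. Qed.
Lemma DN x : R x -> D (- x) = - D x.
Proof. move=> h; have e := DA h (RN h); rewrite subrr D0 in e. by apply/eqP; rewrite -addr_eq0 addrC -e. Qed.
Lemma DB x y : R x -> R y -> D (x - y) = D x - D y.
Proof. by move=> hx hy; rewrite DA ?DN //; apply: RN. Qed.
Lemma D1 : D 1 = 0.
Proof. have h := DM R1 R1; rewrite mulr1 !mul1r in h. by apply: (addrI (D 1)); rewrite addr0 -h. Qed.
Lemma Dsum (I : Type) (r : seq I) (P : pred I) (F : I -> B) :
  (forall i, P i -> R (F i)) -> D (\sum_(i <- r | P i) F i) = \sum_(i <- r | P i) D (F i).
Proof.
move=> h; suff: R (\sum_(i <- r | P i) F i) /\ D (\sum_(i <- r | P i) F i) = \sum_(i <- r | P i) D (F i) by case.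
apply: (big_rec2 (fun x y => R x /\ D x = y)); first by split; [apply: R0|apply: D0].
by move=> i x y Pi [hx <-]; split; [apply: RA => //; apply: h | rewrite DA //; apply: h].
Qed.
Lemma iterA n x y : R x -> R y -> iter n D (x + y) = iter n D x + iter n D y.
Proof. by move=> hx hy; elim: n => //= n ->; rewrite DA //; apply: Riter. Qed.
Lemma iterN n x : R x -> iter n D (- x) = - iter n D x.
Proof. by move=> hx; elim: n => //= n ->; rewrite DN //; apply: Riter. Qed.
Lemma iterB n x y : R x -> R y -> iter n D (x - y) = iter n D x - iter n D y.
Proof. by move=> hx hy; rewrite iterA ?iterN //; apply: RN. Qed.
Lemma iterSum n (I : Type) (r : seq I) (P : pred I) (F : I -> B) :
  (forall i, P i -> R (F i)) -> iter n D (\sum_(i <- r | P i) F i) = \sum_(i <- r | P i) iter n D (F i).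
Proof.
move=> h; elim: n => [|n IH] /=; first by [].
by rewrite IH Dsum // => i Pi; apply: Riter; apply: h.
Qed.
Lemma DcM c x : R c -> D c = 0 -> R x -> D (c * x) = c * D x.
Proof. by move=> hc hDc hx; rewrite DM // hDc mulr0 addr0. Qed.
Lemma itercM n c x : R c -> D c = 0 -> R x -> iter n D (c * x) = c * iter n D x.
Proof. by move=> hc hDc hx; elim: n => //= n ->; rewrite DcM //; apply: Riter. Qed.
Lemma DX x n : R x -> D (x ^+ n.+1) = n.+1%:R * (x ^+ n * D x).
Proof.
move=> hx; elim: n => [|n IH]; first by rewrite expr1 expr0 mul1r mul1r.
rewrite exprS DM //; last exact: RX. rewrite IH. rewrite exprS.
rewrite [(n.+2)%:R]mulrSr. ring.
Qed.


Hypothesis hc : forall n, (n%:R == 0 :> B) = (n == 0)%N.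

Definition degle (x : B) n := iter n.+1 D x = 0.
Definition isdeg (x : B) n := iter n D x != 0 /\ iter n.+1 D x = 0.

Lemma iter_big x p m : degle x p -> (p < m)%N -> iter m D x = 0.
Proof.
move=> h lt; rewrite -(subnK lt) iterD. by rewrite h iter0.
Qed.
Lemma degle_mono x p q : degle x p -> (p <= q)%N -> degle x q.
Proof. by move=> h le; apply: (iter_big h). Qed.
Lemma degle_iter x p j : degle x p -> degle (iter j D x) (p - j).
Proof.
move=> h; rewrite /degle -iterD; apply: (iter_big h).
lia.
Qed.
Lemma degleD x p : degle x p.+1 -> degle (D x) p.
Proof. by rewrite /degle -iterSr. Qed.
Lemma degle0 p : degle 0 p. Proof. exact: iter0. Qed.

Lemma degleM n : forall p q a b, (p + q = n)%N -> R a -> R b ->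
  degle a p -> degle b q -> degle (a * b) (p + q).
Proof.
elim: n => [|n IH] p q a b.
  case: p => //; case: q => // _ ha hb; rewrite /degle /= => ha1 hb1.
  by rewrite DM // ha1 hb1 !mulr0 addr0.
move=> e ha hb hap hbq; rewrite /degle iterSr DM // iterA; first last.
- by apply: RM => //; apply: RDx.
- by apply: RM => //; apply: RDx.
have t1 : iter (p + q) D (a * D b) = 0.
  case: q e hbq => [|q'] e hbq.
    by move: hbq; rewrite /degle /= => ->; rewrite mulr0 iter0.
  have := IH p q' a (D b); rewrite addnS in e; case: e => e.
  move/(_ e ha (RDx hb) hap (degleD hbq)); by rewrite /degle addnS.
have t2 : iter (p + q) D (b * D a) = 0.
  clear t1; case: p e hap => [|p'] e hap.
    by move: hap; rewrite /degle /= => ->; rewrite mulr0 iter0.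
  have := IH q p' b (D a); rewrite addSn in e; case: e => e.
  rewrite addnC in e.
  move/(_ e hb (RDx ha) hbq (degleD hap)); rewrite /degle => h.
  by rewrite addSn addnC.
by rewrite t1 t2 addr0.
Qed.

Lemma topM n : forall p q a b, (p + q = n)%N -> R a -> R b ->
  degle a p -> degle b q -> iter n D (a * b) = 'C(n, p)%:R * (iter p D a * iter q D b).
Proof.
elim: n => [|n IH] p q a b.
  by case: p => //; case: q => // _ ha hb _ _ /=; rewrite mul1r.
move=> e ha hb hap hbq; rewrite iterSr DM // iterA; first last.
- by apply: RM => //; apply: RDx.
- by apply: RM => //; apply: RDx.
case: p e hap => [|p'] e hap; case: q e hbq => [|q'] e hbq //.
- have hDa : D a = 0 by move: hap; rewrite /degle /=.
  rewrite hDa mulr0 iter0 addr0.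
  rewrite add0n in e; case: e => e.
  rewrite (IH 0%N q' a (D b) e ha (RDx hb) hap (degleD hbq)).
  by rewrite !bin0 /=; rewrite -iterSr.
- have hDb : D b = 0 by move: hbq; rewrite /degle /=.
  rewrite hDb mulr0 iter0 add0r.
  rewrite addn0 in e; case: e => e.
  have e' : (p' + 0 = n)%N by rewrite addn0.
  rewrite mulrC (IH p' 0%N (D a) b e' (RDx ha) hb (degleD hap) hbq).
  by rewrite e !binn /=; rewrite -iterSr.
have e1 : (p'.+1 + q' = n)%N by move: e; rewrite addnS => -[].
have e2 : (p' + q'.+1 = n)%N by move: e; rewrite addSn => -[].
rewrite (IH p'.+1 q' a (D b) e1 ha (RDx hb) hap (degleD hbq)).
rewrite [b * D a]mulrC (IH p' q'.+1 (D a) b e2 (RDx ha) hb (degleD hap) hbq).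
rewrite binS natrD -!iterSr. ring.
Qed.

Lemma isdegM a b p q : R a -> R b -> isdeg a p -> isdeg b q -> isdeg (a * b) (p + q).
Proof.
move=> ha hb [hp1 hp2] [hq1 hq2]; split; last exact: degleM.
rewrite (topM (p:=p) (q:=q)) // mulf_neq0 ?mulf_neq0 //.
by rewrite hc -lt0n bin_gt0 leq_addr.
Qed.

Lemma deg_exists x : R x -> x != 0 -> exists p, isdeg x p.
Proof.
move=> hx nz; have ex : exists m, iter m D x == 0.
  by case: (Dnil hx) => m hm; exists m; apply/eqP.
case: (ex_minnP ex) => m0 /eqP hm0 hmin.
case: m0 hm0 hmin => [|p] hm0 hmin; first by rewrite /= in hm0; rewrite hm0 eqxx in nz.
exists p; split => //; apply/negP => /hmin; by rewrite ltnn.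
Qed.

Lemma isdeg_le x p N : isdeg x p -> degle x N -> (p <= N)%N.
Proof.
case=> h1 _ h2; rewrite leqNgt; apply/negP => lt; move: h1.
by rewrite (iter_big h2 lt) eqxx.
Qed.
Lemma isdeg_uniq x p q : isdeg x p -> isdeg x q -> p = q.
Proof.
move=> hp hq; apply/eqP; rewrite eqn_leq (isdeg_le hp (proj2 hq)).
exact: (isdeg_le hq (proj2 hp)).
Qed.
Lemma isdeg_const c : D c = 0 -> c != 0 -> isdeg c 0.
Proof. by move=> h nz; split. Qed.
Lemma isdeg0D x : isdeg x 0 -> D x = 0. Proof. by case. Qed.
Lemma isdeg1 : isdeg 1 0. Proof. split; [exact: oner_neq0 | exact: D1]. Qed.
Lemma isdegX y d e : R y -> isdeg y d -> isdeg (y ^+ e) (e * d).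
Proof.
move=> hy hd; elim: e => [|e IH]; first by rewrite expr0 mul0n; exact: isdeg1.
by rewrite exprS mulSn; apply: isdegM => //; apply: RX.
Qed.


Definition dvd (x z : B) := exists u, z = x * u.
Definition cop (x y : B) := forall z, dvd x z -> dvd y z -> dvd (x * y) z.

Lemma dvd0 x : dvd x 0. Proof. by exists 0; rewrite mulr0. Qed.
Lemma dvd_refl x : dvd x x. Proof. by exists 1; rewrite mulr1. Qed.
Lemma dvd_mulr x z w : dvd x z -> dvd x (z * w).
Proof. by case=> u ->; exists (u * w); rewrite mulrA. Qed.
Lemma dvd_mull x z w : dvd x z -> dvd x (w * z).
Proof. by rewrite mulrC; apply: dvd_mulr. Qed.
Lemma dvd_trans x y z : dvd x y -> dvd y z -> dvd x z.
Proof. by case=> u -> [v ->]; exists (u * v); rewrite mulrA. Qed.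
Lemma dvdN x z : dvd x z -> dvd x (- z).
Proof. by case=> u ->; exists (- u); rewrite mulrN. Qed.
Lemma dvdA x y z : dvd x y -> dvd x z -> dvd x (y + z).
Proof. by case=> u -> [v ->]; exists (u + v); rewrite mulrDr. Qed.
Lemma dvd_sum (I : Type) (r : seq I) (P : pred I) (F : I -> B) x :
  (forall i, P i -> dvd x (F i)) -> dvd x (\sum_(i <- r | P i) F i).
Proof. by move=> h; apply: big_ind => //; [apply: dvd0 | apply: dvdA]. Qed.
Lemma dvdX x a b : (a <= b)%N -> dvd (x ^+ a) (x ^+ b).
Proof. by move=> le; exists (x ^+ (b - a)); rewrite -exprD subnKC. Qed.

Lemma cop_sym x y : cop x y -> cop y x.
Proof. by move=> h z hy hx; rewrite mulrC; apply: h. Qed.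
Lemma cop1 x : cop x 1.
Proof. by move=> z hx _; rewrite mulr1. Qed.
Lemma copM x y w : cop x y -> cop x w -> cop x (y * w).
Proof.
move=> hy hw z hx hyw.
have [r er] : dvd (x * y) z by apply: hy => //; apply: dvd_trans hyw; apply: dvd_mulr; apply: dvd_refl.
case: hyw => t et.
have [y0|ny] := eqVneq y 0; first by rewrite y0 mulr0 mul0r in er; rewrite er; apply: dvd0.
have e : x * r = w * t.
  by apply: (mulfI ny); rewrite mulrA [y * x]mulrC -er et mulrA.
have [r' er'] : dvd (x * w) (x * r).
  by apply: hw; [apply: dvd_mulr; apply: dvd_refl | rewrite e; apply: dvd_mulr; apply: dvd_refl].
exists r'; rewrite er; transitivity (y * (x * r)); first by ring.
by rewrite er'; ring.
Qed.
Lemma copX x y q : cop x y -> cop x (y ^+ q).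
Proof. by move=> h; elim: q => [|q IH]; [rewrite expr0; apply: cop1 | rewrite exprS; apply: copM]. Qed.
Lemma copXX x y p q : cop x y -> cop (x ^+ p) (y ^+ q).
Proof. by move=> h; apply: copX; apply: cop_sym; apply: copX; apply: cop_sym. Qed.
Lemma cop_prod (I : Type) (r : seq I) (P : pred I) (F : I -> B) x :
  (forall i, P i -> cop x (F i)) -> cop x (\prod_(i <- r | P i) F i).
Proof. by move=> h; apply: big_ind => //; [apply: cop1 | apply: copM]. Qed.

Lemma dvd_prod_seq (I : eqType) (s : seq I) (F : I -> B) z :
  uniq s -> (forall i j, i \in s -> j \in s -> i != j -> cop (F i) (F j)) ->
  (forall i, i \in s -> dvd (F i) z) -> dvd (\prod_(i <- s) F i) z.
Proof.
elim: s => [|a s IH] /=; first by rewrite big_nil => _ _ _; exists z; rewrite mul1r.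
case/andP=> nas us hc' hd; rewrite big_cons.
have hcop : cop (F a) (\prod_(i <- s) F i).
  rewrite big_seq; apply: cop_prod => i iS; apply: hc'.
  - by rewrite inE eqxx.
  - by rewrite inE iS orbT.
  - by apply/eqP => e; move: nas; rewrite e iS.
apply: hcop; first by apply: hd; rewrite inE eqxx.
apply: IH => //.
- by move=> i j hi hj; apply: hc'; rewrite inE ?hi ?hj orbT.
- by move=> i hi; apply: hd; rewrite inE hi orbT.
Qed.
Lemma dvd_prod_set (I : finType) (S : {set I}) (F : I -> B) z :
  (forall i j, i \in S -> j \in S -> i != j -> cop (F i) (F j)) ->
  (forall i, i \in S -> dvd (F i) z) -> dvd (\prod_(i in S) F i) z.
Proof.
move=> h1 h2; rewrite -big_enum; apply: dvd_prod_seq; first exact: enum_uniq.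
- by move=> i j; rewrite !mem_enum; apply: h1.
- by move=> i; rewrite mem_enum; apply: h2.
Qed.


Definition Wr m (f : 'I_m -> B) : 'M[B]_m := \matrix_(j < m, i < m) iter j D (f i).

Lemma Rdet n (A : 'M[B]_n) : (forall i j, R (A i j)) -> R (\det A).
Proof.
move=> h; rewrite /determinant; apply: Rsum => s _; apply: RM.
  by apply: RX; apply: RN; apply: R1.
by apply: Rprod => i _; apply: h.
Qed.

Lemma Ek a b : R a -> R b -> a != 0 -> a * D b = D a * b ->
  forall k, a * iter k D b = iter k D a * b.
Proof.
move=> ha hb na hab; elim=> [|k IH] //=.
set X := iter k D b in IH *; set Y := iter k D a in IH *.
have hX : R X by apply: Riter. have hY : R Y by apply: Riter.
have H1 := congr1 D IH; rewrite (DM ha hX) (DM hY hb) in H1.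
have H2 : D a * X = Y * D b.
  apply: (mulfI na); rewrite mulrA [a * D a]mulrC -mulrA IH mulrA [D a * Y]mulrC -mulrA -hab; ring.
rewrite [X * D a]mulrC H2 [Y * D b + _]addrC in H1; move/addIr: H1 => ->.
by rewrite mulrC.
Qed.

Lemma wr_dep m : forall (f : 'I_m -> B), (forall i, R (f i)) -> \det (Wr f) = 0 ->
  exists b : 'I_m -> B, (forall i, R (b i) /\ D (b i) = 0) /\ (exists i, b i != 0)
    /\ \sum_i b i * f i = 0.
Proof.
elim: m => [|m IH] f hf hW.
  by move: hW; rewrite det_mx00 => /eqP; rewrite oner_eq0.
pose g := fun i : 'I_m => f (lift ord_max i).
have hg : forall i, R (g i) by move=> i; apply: hf.
have liftW : forall i : 'I_m, lift ord_max i = widen_ord (leqnSn m) i.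
  by move=> i; apply: val_inj; rewrite [LHS]lift_max.
have [W0|Wn0] := eqVneq (\det (Wr g)) 0.
  have [b' [hb1 [[i0 hi0] hb3]]] := IH g hg W0.
  exists (fun i => if unlift ord_max i is Some j then b' j else 0); split; [|split].
  - move=> i; case: unliftP => [j _|_]; [exact: hb1 | split; [exact: R0 | exact: D0]].
  - by exists (lift ord_max i0); rewrite liftK.
  - rewrite big_ord_recr /= unlift_none mul0r addr0 -[RHS]hb3.
    by apply: eq_bigr => i _; rewrite -liftW liftK.
set A := Wr f.
pose v := fun i => cofactor A ord_max i.
have hv : forall i, R (v i).
  move=> i; rewrite /v /cofactor; apply: RM; first by apply: RX; apply: RN; apply: R1.
  by apply: Rdet => j k; rewrite !mxE; apply: Riter; apply: hf.
have hrow : forall j : 'I_m.+1, \sum_i iter j D (f i) * v i = 0.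
  move=> j; have := congr1 (fun M : 'M_m.+1 => M j ord_max) (mul_mx_adj A).
  rewrite !mxE hW mul0rn => h; rewrite -[RHS]h; apply: eq_bigr => i _.
  by rewrite /adjugate !mxE.
have vmax : v ord_max = \det (Wr g).
  rewrite /v /cofactor /= addnn -signr_odd odd_double expr0 mul1r.
  congr (\det _); apply/matrixP => i j; rewrite !mxE.
  by rewrite lift_max.
have hDrow : forall j : 'I_m, \sum_i iter j D (f i) * D (v i) = 0.
  move=> j.
  have h1 := hrow (widen_ord (leqnSn m) j); rewrite /= in h1.
  have h2 := hrow (lift ord0 j); rewrite lift0 in h2.
  have e : D (\sum_i iter j D (f i) * v i) =
      \sum_i iter j D (f i) * D (v i) + \sum_i iter j.+1 D (f i) * v i.
    rewrite Dsum; last by move=> i _; apply: RM; [apply: Riter; apply: hf | apply: hv].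
    rewrite -big_split; apply: eq_bigr => i _ /=; rewrite DM ?hv //; last by apply: Riter.
    by rewrite [v i * _]mulrC.
  by move: e; rewrite h1 h2 D0 addr0 => <-.
have hu : forall i, v ord_max * D (v i) = D (v ord_max) * v i.
  pose u := fun i => v ord_max * D (v i) - D (v ord_max) * v i.
  have hu0 : forall j : 'I_m, \sum_i iter j D (f i) * u i = 0.
    move=> j; rewrite /u.
    have -> : \sum_i iter j D (f i) * (v ord_max * D (v i) - D (v ord_max) * v i) =
        v ord_max * \sum_i iter j D (f i) * D (v i) - D (v ord_max) * \sum_i iter j D (f i) * v i.
      by rewrite !mulr_sumr -sumrB; apply: eq_bigr => i _; ring.
    rewrite hDrow; have := hrow (widen_ord (leqnSn m) j); rewrite /= => ->.
    by rewrite !mulr0 subrr.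
  have hu' : forall j : 'I_m, \sum_(i < m) iter j D (g i) * u (lift ord_max i) = 0.
    move=> j; rewrite -[RHS](hu0 j) big_ord_recr /=.
    have -> : u ord_max = 0 by rewrite /u mulrC subrr.
    by rewrite mulr0 addr0; apply: eq_bigr => i _; rewrite /g !liftW.
  pose U := \col_(i < m) u (lift ord_max i).
  have hWU : Wr g *m U = 0.
    apply/matrixP => j k; rewrite !mxE -[RHS](hu' j); apply: eq_bigr => i _.
    by rewrite !mxE.
  have := congr1 (mulmx (\adj (Wr g))) hWU.
  rewrite mulmxA mul_adj_mx mul_scalar_mx mulmx0 => hZ.
  move=> i; case: (unliftP ord_max i) => [i' ->|->]; last by rewrite mulrC.
  have := congr1 (fun M : 'cV_m => M i' ord0) hZ; rewrite !mxE => /eqP.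
  by rewrite mulf_eq0 (negbTE Wn0) /= /u subr_eq0 => /eqP.
have na : v ord_max != 0 by rewrite vmax.
have [p hp] := deg_exists (hv ord_max) na.
have hE := fun i k => Ek (hv ord_max) (hv i) na (hu i) k.
exists (fun i => iter p D (v i)); split; [|split].
- move=> i; split; first by apply: Riter.
  change (iter p.+1 D (v i) = 0).
  by apply: (mulfI na); rewrite mulr0 hE (proj2 hp) mul0r.
- by exists ord_max; exact: (proj1 hp).
- apply: (mulfI na); rewrite mulr0.
  transitivity (iter p D (v ord_max) * \sum_i f i * v i).
    by rewrite !mulr_sumr; apply: eq_bigr => i _; rewrite mulrA hE; ring.
  by have := hrow ord0; rewrite /= => ->; rewrite mulr0.
Qed.


Definition deg (x : B) : nat :=
  if x == 0 then 0%N else epsilon (inhabits 0%N) (fun p => isdeg x p).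
Lemma degP x : R x -> x != 0 -> isdeg x (deg x).
Proof.
move=> hx nz; rewrite /deg (negbTE nz); apply: epsilon_spec; exact: deg_exists.
Qed.
Lemma deg_const x : R x -> D x = 0 -> deg x = 0%N.
Proof.
move=> hx h; have [->|nz] := eqVneq x 0; first by rewrite /deg eqxx.
exact: (isdeg_uniq (degP hx nz) (isdeg_const h nz)).
Qed.
Lemma degD0 x : R x -> deg x = 0%N -> D x = 0.
Proof.
move=> hx h; have [->|nz] := eqVneq x 0; first exact: D0.
by apply: isdeg0D; rewrite -h; apply: degP.
Qed.
Lemma degle_deg x : R x -> degle x (deg x).
Proof.
move=> hx; have [->|nz] := eqVneq x 0; first exact: degle0.
exact: (proj2 (degP hx nz)).
Qed.
Lemma degleX y d e : R y -> degle y d -> degle (y ^+ e) (e * d).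
Proof.
move=> hy hd; elim: e => [|e IH]; first by rewrite expr0 mul0n /degle /= D1.
rewrite exprS mulSn; apply: (degleM (n := (d + e * d)%N)) => //; exact: RX.
Qed.
Lemma degle_const c x n : R c -> D c = 0 -> R x -> degle x n -> degle (c * x) n.
Proof. by move=> hC h hx hn; rewrite /degle itercM // hn mulr0. Qed.
Lemma degle_sum (I : Type) (r : seq I) (P : pred I) (F : I -> B) n :
  (forall i, P i -> R (F i) /\ degle (F i) n) -> degle (\sum_(i <- r | P i) F i) n.
Proof.
move=> h; rewrite /degle iterSum; last by move=> i /h [].
by apply: big1 => i /h [].
Qed.
Lemma DXconst y e : R y -> D y = 0 -> D (y ^+ e) = 0.
Proof.
move=> hy h; case: e => [|e]; first by rewrite expr0 D1.
by rewrite DX // h !mulr0.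
Qed.

Lemma iterX_dvd y e j : R y -> exists g, R g /\ iter j D (y ^+ e) = y ^+ (e - j) * g.
Proof.
move=> hy; elim: j => [|j [g [hg IH]]].
  by exists 1; split; [exact: R1 | rewrite subn0 mulr1].
rewrite iterS IH subnS; case E: (e - j)%N => [|s] /=.
  by exists (D g); split; [apply: RDx | rewrite expr0 !mul1r].
exists (y * D g + s.+1%:R * g * D y); split.
  apply: RA; apply: RM => //; try apply: RDx => //; try apply: RM => //; exact: Rnat.
rewrite DM //; last exact: RX. rewrite DX //. rewrite exprS. ring.
Qed.

Lemma det_colrep k (M : 'M[B]_k) (s0 : 'I_k) :
  \det (\matrix_(r0, r) if r == s0 then - \sum_r' M r0 r' else M r0 r) = - \det M.
Proof.
set M' := \matrix_(r0, r) _.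
have ec : forall r0, cofactor M' r0 s0 = cofactor M r0 s0.
  move=> r0; rewrite /cofactor; congr (_ * \det _); apply/matrixP => i j.
  by rewrite !mxE eq_sym (negbTE (neq_lift _ _)).
rewrite (expand_det_col _ s0).
transitivity (- \sum_r' \sum_r0 cofactor M r0 s0 * M r0 r').
  rewrite exchange_big -sumrN; apply: eq_bigr => r0 _.
  rewrite ec !mxE eqxx mulNr mulr_suml; congr (- _); apply: eq_bigr => r' _.
  by rewrite mulrC.
congr (- _); transitivity (\sum_r' (\adj M *m M) s0 r').
  by apply: eq_bigr => r' _; rewrite !mxE; apply: eq_bigr => r0 _; rewrite /adjugate mxE.
rewrite mul_adj_mx (bigD1 s0) //= big1 ?addr0; first by rewrite mxE eqxx mulr1n.
by move=> r ne; rewrite mxE eq_sym (negbTE ne) mulr0n.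
Qed.


Lemma wr_upper k (f : 'I_k -> B) (dl : 'I_k -> nat) :
  (forall r, R (f r)) -> (forall r, degle (f r) (dl r)) -> \det (Wr f) != 0 ->
  (\sum_(r < k) (r : nat) <= \sum_r dl r)%N /\
  degle (\det (Wr f)) (\sum_r dl r - \sum_(r < k) (r : nat))%N.
Proof.
move=> hf hd nz.
set T := (\sum_(r < k) (r : nat))%N. set Sg := (\sum_r dl r)%N.
have good : forall s : 'S_k, (forall r : 'I_k, r <= dl (s r))%N ->
    (T <= Sg)%N /\ R (\prod_(r < k) iter r D (f (s r))) /\
    degle (\prod_(r < k) iter r D (f (s r))) (Sg - T).
  move=> s hs.
  have eS : Sg = (\sum_r dl (s r))%N by rewrite /Sg (reindex_inj (@perm.perm_inj _ s)).
  have e2 : (\sum_(r < k) (dl (s r) - r) + T = \sum_r dl (s r))%N.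
    by rewrite /T -big_split; apply: eq_bigr => r _ /=; rewrite subnK.
  split; first by rewrite eS -e2 leq_addl.
  have -> : (Sg - T = \sum_(r < k) (dl (s r) - r))%N by rewrite eS -e2 addnK.
  apply: (big_ind2 (fun x n => R x /\ degle x n)).
  - by split; [exact: R1 | rewrite /degle /= D1].
  - move=> x1 x2 y1 y2 [hx1 hx2] [hy1 hy2]; split; first exact: RM.
    exact: (degleM (n := (x2 + y2)%N)).
  - by move=> r _; split; [apply: Riter | apply: degle_iter].
have bad : forall s : 'S_k, ~~ [forall r : 'I_k, (r <= dl (s r))%N] ->
    \prod_(r < k) iter r D (f (s r)) = 0.
  move=> s /forallPn [r]; rewrite -ltnNge => lt.
  apply/eqP/prodf_eq0; exists r => //; apply/eqP; exact: (iter_big (hd _) lt).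
have hsgn : forall (b : bool) x n, R x -> degle x n -> degle ((-1) ^+ b * x) n.
  move=> b x n hx hn; case: b; rewrite ?expr1 ?expr0 ?mulN1r ?mul1r //.
  by rewrite /degle iterN // hn oppr0.
case: (boolP [exists s : 'S_k, [forall r : 'I_k, (r <= dl (s r))%N]]) => [/existsP [s0 hs0] | none].
  have [hT _] := good s0 (fun r => (forallP hs0) r).
  split => //; rewrite /determinant; apply: degle_sum => s _; split.
    apply: RM; first by apply: RX; apply: RN; apply: R1.
    by apply: Rprod => r _; rewrite mxE; apply: Riter; apply: hf.
  case: (boolP [forall r : 'I_k, (r <= dl (s r))%N]) => hs.
    have [_ [hR' hdeg]] := good s (fun r => (forallP hs) r).
    apply: hsgn.
      by apply: Rprod => r _; rewrite mxE; apply: Riter; apply: hf.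
    by rewrite /degle; under eq_bigr do rewrite mxE; exact: hdeg.
  have -> : \prod_i Wr f i (s i) = 0.
    by rewrite -[RHS](bad s hs); apply: eq_bigr => i _; rewrite mxE.
  by rewrite mulr0; exact: degle0.
exfalso; move: nz; rewrite /determinant big1 ?eqxx // => s _.
have hs : ~~ [forall r : 'I_k, (r <= dl (s r))%N].
  by apply/negP => h; move/negP: none; apply; apply/existsP; exists s.
rewrite -[RHS](mulr0 ((-1) ^+ perm.odd_perm s)) -(bad s hs); congr (_ * _).
by apply: eq_bigr => i _; rewrite mxE.
Qed.


Lemma sum_sub_le (I : finType) (T S : {set I}) (w : I -> rat) :
  T \subset S -> (forall i, i \in S -> 0 <= w i) ->
  \sum_(i in T) w i <= \sum_(i in S) w i.
Proof.
move=> TS hw; rewrite [X in _ <= X](big_setID T) /= (setIidPr TS) lerDl.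
by apply: sumr_ge0 => i; rewrite inE => /andP [_ /hw].
Qed.
Lemma sum_ge0S (I : finType) (S : {set I}) (w : I -> rat) :
  (forall i, i \in S -> 0 <= w i) -> 0 <= \sum_(i in S) w i.
Proof. by move=> hw; apply: sumr_ge0 => i /hw. Qed.
Lemma weight_mono (a2 a : nat) (s2 s : rat) :
  (a2 <= a)%N -> 0 <= s2 -> s2 <= s -> (a - 2)%:R * s <= 1 -> (a2 - 2)%:R * s2 <= 1.
Proof.
move=> le h0 hs h; apply: le_trans h; apply: ler_pM => //.
by rewrite ler_nat; apply: leq_sub2r.
Qed.

Lemma arith1 a b s N : (s <= N.+1)%N -> (a + b = s)%N -> (1 < a)%N -> (b.+1 <= N)%N.
Proof. lia. Qed.
Lemma arith2 a b s N : (s <= N.+1)%N -> (0 < a)%N -> (a + b = s)%N -> (b <= N)%N.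
Proof. lia. Qed.
Lemma arith3 a b s : (a + b = s)%N -> (1 < a)%N -> (b.+1 <= s)%N.
Proof. lia. Qed.

Lemma arith4 a b c : (a * c <= (a - b) * c + b * c)%N.
Proof. by rewrite -mulnDl leq_mul2r addnC -leq_subLR leqnn orbT. Qed.
Lemma arith5 P dq Sd T E Y : (P + dq <= Sd - T)%N -> (T <= Sd)%N -> (E + Sd <= P + Y)%N ->
  (E + T <= Y)%N.
Proof. lia. Qed.

Hypothesis hF : factorially_closed R.

Lemma core (I : finType) N : forall (S : {set I}) (y : I -> B) (e : I -> nat)
  (c : I -> B) (w : I -> rat),
  (#|S| <= N)%N ->
  (forall i, i \in S -> R (y i)) ->
  (forall i, i \in S -> [/\ R (c i), D (c i) = 0 & c i != 0]) ->
  (forall i, i \in S -> (0 < e i)%N) ->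
  (forall i j, i \in S -> j \in S -> i != j -> cop (y i) (y j)) ->
  (forall i, i \in S -> 0 <= w i) ->
  (forall i, i \in S -> D (y i) = 0 \/ 1 <= (e i)%:R * w i) ->
  ((#|S| - 2)%:R * \sum_(i in S) w i <= 1) ->
  \sum_(i in S) c i * y i ^+ e i = 0 ->
  forall i, i \in S -> D (y i) = 0.
Proof.
elim: N => [|N IH] S y e c w hN hy hcc he hcop hw hwe hsum hrel.
  move=> i iS; move: hN; rewrite leqn0 => /eqP/card0_eq/(_ i).
  by rewrite iS.
move=> i0 i0S.
pose F := fun i => c i * y i ^+ e i.
have hFR : forall i, i \in S -> R (F i).
  by move=> i iS; have [? _ _] := hcc i iS; apply: RM => //; apply: RX; apply: hy.
have [S1|S2] := leqP #|S| 1.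
  have : #|S| == 1%N.
    by rewrite eqn_leq S1 card_gt0; apply/set0Pn; exists i0.
  case/cards1P => j Sj.
  have hj : j \in S by rewrite Sj inE.
  have [_ _ cj] := hcc j hj.
  move: i0S hrel; rewrite Sj inE => /eqP ->.
  rewrite big_set1 => /eqP; rewrite mulf_eq0 (negbTE cj) /= expf_eq0.
  by case/andP => _ /eqP ->; apply: D0.
pose d := fun i => deg (y i).
pose t := [arg max_(i > i0 in S) (e i * d i)%N].
have [tS tmax] : t \in S /\ forall i, i \in S -> (e i * d i <= e t * d t)%N.
  by rewrite /t; case: arg_maxnP => // j jS hj; split.
pose S' := S :\ t.
have S'S : S' \subset S by apply: subsetDl.
have inS' : forall i, i \in S' -> i \in S by move=> i; rewrite inE => /andP [].
have cardS : #|S| = #|S'|.+1 by rewrite (cardsD1 t S) tS.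
pose k := #|S'|.
have k1 : (0 < k)%N by move: S2; rewrite cardS.
pose f := fun r : 'I_k => F (enum_val r).
have hf : forall r, R (f r) by move=> r; apply: hFR; apply: inS'; apply: enum_valP.
have sumS : \sum_(i in S) F i = F t + \sum_(r < k) f r.
  rewrite (bigD1 t) //=; congr (_ + _).
  have -> : \sum_(r < k) f r = \sum_(i in S') F i by rewrite [RHS]big_enum_val.
  by apply: eq_bigl => i; rewrite in_setD1 andbC.
have Ft : F t = - \sum_(r < k) f r.
  by apply/eqP; rewrite -addr_eq0 -sumS; apply/eqP; exact: hrel.
have hcS : forall i, i \in S -> R (c i) /\ D (c i) = 0.
  by move=> i iS; have [? ? _] := hcc i iS.
have DFc : forall i, i \in S -> D (y i) = 0 -> D (F i) = 0.
  move=> i iS h; have [? ?] := hcS i iS.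
  have ry : R (y i ^+ e i) by apply: RX; apply: hy.
  by rewrite /F DcM // DXconst ?mulr0 //; apply: hy.
have [W0|Wn0] := eqVneq (\det (Wr f)) 0.
  have [b [hb [[r0 hr0] hbsum]]] := wr_dep hf W0.
  pose bb := fun i => \sum_(r < k | enum_val r == i) b r.
  have bbE : forall r, bb (enum_val r) = b r.
    move=> r; rewrite /bb (eq_bigl (fun r' => r' == r)) ?big_pred1_eq // => r'.
    by apply/inj_eq/enum_val_inj.
  have bb0 : forall i, i \notin S' -> bb i = 0.
    move=> i ni; apply: big1 => r /eqP er; move: ni; rewrite -er.
    by rewrite (enum_valP r).
  have hbb : forall i, R (bb i) /\ D (bb i) = 0.
    move=> i; split; first by apply: Rsum => r _; case: (hb r).
    by rewrite Dsum => [|r _]; [apply: big1 => r _; case: (hb r) | case: (hb r)].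
  pose T1 := [set i in S' | bb i != 0].
  have T1S : T1 \subset S.
    by apply/subsetP => i; rewrite inE => /andP [/inS' ? _].
  have inT1 : forall i, i \in T1 -> i \in S by move=> i /(subsetP T1S).
  have r0T1 : enum_val r0 \in T1 by rewrite inE enum_valP bbE hr0.
  have relT1 : \sum_(i in T1) (bb i * c i) * y i ^+ e i = 0.
    transitivity (\sum_(i in S') bb i * F i).
      rewrite [RHS](bigID (fun i => bb i != 0)) /= [X in _ = _ + X]big1 ?addr0; last first.
        by move=> i /andP [_]; rewrite negbK => /eqP ->; rewrite mul0r.
      by apply: eq_big => [i|i _]; rewrite ?inE // /F mulrA.
    rewrite [LHS]big_enum_val -[RHS]hbsum; apply: eq_bigr => r _.
    by rewrite bbE.
  have hT1 : forall i, i \in T1 -> D (y i) = 0.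
    apply: (IH T1 y e (fun i => bb i * c i) w).
    - by rewrite -ltnS (leq_trans _ hN) // cardS ltnS subset_leq_card //;
         apply/subsetP => i; rewrite inE => /andP [].
    - by move=> i /inT1; apply: hy.
    - move=> i iT; have [H1 H3 H2] := hcc i (inT1 _ iT); have [? ?] := hbb i.
      split => /=; first by apply: RM.
        by rewrite DcM // H3 mulr0.
      by rewrite mulf_neq0 //; move: iT; rewrite inE => /andP [].
    - by move=> i /inT1; apply: he.
    - by move=> i j /inT1 ? /inT1 ?; apply: hcop.
    - by move=> i /inT1; apply: hw.
    - by move=> i /inT1; apply: hwe.
    - apply: (weight_mono _ _ _ hsum).
      + exact: subset_leq_card.
      + by apply: sum_ge0S => i /inT1; apply: hw.
      + exact: sum_sub_le.
    - exact: relT1.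
  pose T2 := S :\: T1.
  have T2S : T2 \subset S by apply: subsetDl.
  have inT2 : forall i, i \in T2 -> i \in S by move=> i /(subsetP T2S).
  pose C := \sum_(i in T1) F i.
  have hC : R C /\ D C = 0.
    split; first by apply: Rsum => i /inT1; apply: hFR.
    rewrite Dsum => [|i /inT1]; last exact: hFR.
    by apply: big1 => i iT; apply: DFc; [apply: inT1 | apply: hT1].
  have relT2 : \sum_(i in T2) F i + C = 0.
    by rewrite addrC /C -(setIidPr T1S) -big_setID; exact: hrel.
  have cardT : (#|T1| + #|T2| = #|S|)%N by rewrite -(cardsID T1 S) (setIidPr T1S).
  have T1pos : (0 < #|T1|)%N by rewrite card_gt0; apply/set0Pn; exists (enum_val r0).
  suff hT2 : forall i, i \in T2 -> D (y i) = 0.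
    case: (boolP (i0 \in T1)) => [/hT1 //|ni]; apply: hT2.
    by rewrite inE ni i0S.
  have [C0|Cn0] := eqVneq C 0.
    apply: (IH T2 y e c w).
    - exact: (arith2 hN T1pos cardT).
    - by move=> i /inT2; apply: hy.
    - by move=> i /inT2; apply: hcc.
    - by move=> i /inT2; apply: he.
    - by move=> i j /inT2 ? /inT2 ?; apply: hcop.
    - by move=> i /inT2; apply: hw.
    - by move=> i /inT2; apply: hwe.
    - apply: (weight_mono _ _ _ hsum).
      + exact: subset_leq_card.
      + by apply: sum_ge0S => i /inT2; apply: hw.
      + exact: sum_sub_le.
    - by move: relT2; rewrite C0 addr0.
  have T1ge2 : (1 < #|T1|)%N.
    rewrite ltn_neqAle T1pos andbT; apply/negP => /eqP /esym /eqP /cards1P [j Tj].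
    have jT : j \in T1 by rewrite Tj inE.
    have bbj : bb j != 0 by move: jT; rewrite inE => /andP [].
    move: relT1 Cn0; rewrite /C Tj !big_set1 /F -mulrA => /eqP.
    by rewrite mulf_eq0 (negbTE bbj) /= => /eqP ->; rewrite eqxx.
  pose j0 := enum_val r0.
  have j0T2 : j0 \notin T2 by rewrite inE r0T1.
  pose S3 := j0 |: T2.
  pose y2 := fun i => if i == j0 then 1 else y i.
  pose e2 := fun i => if i == j0 then 1%N else e i.
  pose c2 := fun i => if i == j0 then C else c i.
  pose w2 := fun i => if i == j0 then 0 else w i.
  have inS3 : forall i, i \in S3 -> i = j0 \/ (i \in T2 /\ i != j0).
    move=> i; rewrite in_setU1; case: eqVneq => [->|ne] /=; [by left | by move=> h; right; split].
  have H := IH S3 y2 e2 c2 w2.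
  move=> i iT2; have ne : i != j0 by apply: contraNneq j0T2 => <-.
  have := H _ _ _ _ _ _ _ _ _ i; rewrite /y2 (negbTE ne); apply.
  - by rewrite cardsU1 j0T2 add1n; apply: (arith1 hN cardT T1ge2).
  - by move=> l /inS3 [->|[/inT2 ? nl]]; rewrite /y2 ?eqxx ?(negbTE nl) //; [exact: R1 | apply: hy].
  - move=> l /inS3 [->|[/inT2 ? nl]]; rewrite /c2 ?eqxx ?(negbTE nl); last by apply: hcc.
    by case: hC => ? ?; split.
  - by move=> l /inS3 [->|[/inT2 ? nl]]; rewrite /e2 ?eqxx ?(negbTE nl) //; apply: he.
  - move=> l m /inS3 [->|[/inT2 ? nl]] /inS3 [->|[/inT2 ? nm]]; rewrite /y2 ?eqxx ?(negbTE nl) ?(negbTE nm) //.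
    + by move=> _; apply: cop_sym; apply: cop1.
    + by move=> _; apply: cop1.
    + by apply: hcop.
  - by move=> l /inS3 [->|[/inT2 ? nl]]; rewrite /w2 ?eqxx ?(negbTE nl) //; apply: hw.
  - by move=> l /inS3 [->|[/inT2 ? nl]]; rewrite /y2 /e2 /w2 ?eqxx ?(negbTE nl); [left; apply: D1 | apply: hwe].
  - have ew : \sum_(l in S3) w2 l = \sum_(l in T2) w l.
      rewrite big_setU1 //= /w2 eqxx add0r; apply: eq_bigr => l lT.
      by rewrite ifN //; apply: contraNneq j0T2 => <-.
    apply: (weight_mono _ _ _ hsum).
    + by rewrite cardsU1 j0T2 add1n; apply: (arith3 cardT T1ge2).
    + by rewrite ew; apply: sum_ge0S => l /inT2; apply: hw.
    + by rewrite ew; apply: sum_sub_le.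
  - rewrite big_setU1 //= /c2 /y2 /e2 eqxx expr1 mulr1 -[RHS]relT2 addrC.
    congr (_ + _); apply: eq_bigr => l lT.
    by rewrite !ifN //; apply: contraNneq j0T2 => <-.
  - by rewrite inE iT2 orbT.
have hdl : forall r, degle (f r) (e (enum_val r) * d (enum_val r))%N.
  move=> r; have iS := inS' _ (enum_valP r); have [? ? _] := hcc _ iS.
  apply: degle_const => //; first by apply: RX; apply: hy.
  by apply: degleX; [apply: hy | apply: degle_deg; apply: hy].
have [hTle hdegW] := wr_upper hf hdl Wn0.
pose m := (k - 1)%N.
have colX : forall i, i \in S -> forall r0 : 'I_k,
    dvd (y i ^+ (e i - m)) (iter r0 D (F i)).
  move=> i iS r0; have [? ? _] := hcc i iS.
  rewrite /F itercM //; last by apply: RX; apply: hy.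
  have [g [_ ->]] := iterX_dvd (e i) r0 (hy i iS).
  apply: dvd_mull; apply: dvd_mulr; apply: dvdX; apply: leq_sub2l.
  by rewrite /m subn1 -ltnS (prednK k1); exact: ltn_ord.
have dvdP : dvd (\prod_(i in S) y i ^+ (e i - m)) (\det (Wr f)).
  apply: dvd_prod_set.
    by move=> i j iS jS ne; apply: copXX; apply: hcop.
  move=> i iS; case: (eqVneq i t) => [->|ne].
    pose s0 := Ordinal k1.
    have := det_colrep (Wr f) s0; move/(congr1 (fun x => - x)); rewrite opprK => <-.
    apply: dvdN; rewrite (expand_det_col _ s0); apply: dvd_sum => r0 _; apply: dvd_mulr.
    rewrite mxE eqxx.
    have -> : - \sum_r' Wr f r0 r' = iter r0 D (F t).
      rewrite Ft iterN; last by apply: Rsum => r _; apply: hf.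
      rewrite iterSum; last by move=> r _; apply: hf.
      by congr (- _); apply: eq_bigr => r _; rewrite mxE.
    exact: colX.
  have iS' : i \in S' by rewrite in_setD1 ne iS.
  pose r := enum_rank_in iS' i.
  have er : enum_val r = i := enum_rankK_in iS' iS'.
  rewrite (expand_det_col _ r); apply: dvd_sum => r0 _; apply: dvd_mulr.
  by rewrite mxE /f er; exact: colX.
set P := \prod_(i in S) y i ^+ (e i - m) in dvdP.
have [q eq] := dvdP.
have RP : R P by apply: Rprod => i iS; apply: RX; apply: hy.
have nzP : P != 0 by apply: contraNneq Wn0 => P0; rewrite eq P0 mul0r.
have nzq : q != 0 by apply: contraNneq Wn0 => q0; rewrite eq q0 mulr0.
have Rq : R q.
  have RW : R (P * q).
    by rewrite -eq; apply: Rdet => a b; rewrite mxE; apply: Riter; apply: hf.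
  by case: (hF nzP nzq RW).
have isP : isdeg P (\sum_(i in S) (e i - m) * d i)%N.
  suff : R P /\ isdeg P (\sum_(i in S) (e i - m) * d i)%N by case.
  have nzf : forall i, i \in S -> y i ^+ (e i - m) != 0.
    move=> i iS; apply/negP => /eqP h; move/negP: nzP; apply; apply/prodf_eq0.
    by exists i => //; apply/eqP.
  rewrite /P; apply: (big_ind2 (fun x n => R x /\ isdeg x n)).
  - by split; [exact: R1 | exact: isdeg1].
  - by move=> x1 x2 y1 y2 [? ?] [? ?]; split; [apply: RM | apply: isdegM].
  - move=> i iS; split; first by apply: RX; apply: hy.
    have [y0|ny] := eqVneq (y i) 0.
      move: (nzf i iS); rewrite y0 expf_eq0 eqxx andbT -leqNgt leqn0 => /eqP ->.
      by rewrite expr0 mul0n; exact: isdeg1.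
    by apply: isdegX; [apply: hy | apply: degP => //; apply: hy].
have [dq isq] := deg_exists Rq nzq.
have isW := isdegM RP Rq isP isq; rewrite -eq in isW.
have le1 := isdeg_le isW hdegW.
have sumSd : (\sum_(r < k) e (enum_val r) * d (enum_val r) = \sum_(i in S') e i * d i)%N.
  by rewrite [RHS]big_enum_val.
have sumSe : (\sum_(i in S) e i * d i = e t * d t + \sum_(i in S') e i * d i)%N.
  rewrite (bigD1 t) //=; congr (_ + _)%N.
  by apply: eq_bigl => i; rewrite in_setD1 andbC.
have spl : (\sum_(i in S) e i * d i <= \sum_(i in S) (e i - m) * d i + m * \sum_(i in S) d i)%N.
  by rewrite big_distrr -big_split /=; apply: leq_sum => i _; exact: arith4.
have key : (e t * d t + \sum_(r < k) (r : nat) <= m * \sum_(i in S) d i)%N.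
  apply: (arith5 le1 hTle); rewrite sumSd -sumSe; exact: spl.
have rat : (m * \sum_(i in S) d i <= e t * d t)%N.
  rewrite -(ler_nat rat) natrM natr_sum.
  have hd : forall i, i \in S -> (d i)%:R <= (e t * d t)%:R * w i :> rat.
    move=> i iS; case: (hwe i iS) => [Dy|hew].
      by rewrite /d (deg_const (hy i iS) Dy) mulr_ge0 ?ler0n //; apply: hw.
    apply: le_trans (_ : (d i)%:R * ((e i)%:R * w i) <= _).
      by rewrite ler_peMr ?ler0n.
    by rewrite mulrA -natrM ler_wpM2r ?hw // ler_nat mulnC; exact: tmax.
  have hsd : \sum_(i in S) (d i)%:R <= (e t * d t)%:R * \sum_(i in S) w i :> rat.
    by rewrite mulr_sumr; apply: ler_sum => i iS; apply: hd.
  apply: le_trans (ler_wpM2l (ler0n _ _) hsd) _.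
  rewrite mulrCA -[X in _ <= X]mulr1; apply: ler_wpM2l; first exact: ler0n.
  by move: hsum; rewrite cardS.
have T0 : (\sum_(r < k) (r : nat) = 0)%N.
  by apply/eqP; rewrite -leqn0 -(leq_add2l (e t * d t)) addn0 (leq_trans key rat).
have k1' : k = 1%N.
  apply/eqP; rewrite eqn_leq k1 andbT leqNgt; apply/negP => k2.
  by move: T0; rewrite (bigD1 (Ordinal k2)) //=.
have E0 : (e t * d t = 0)%N.
  by apply/eqP; rewrite -leqn0; move: key; rewrite T0 addn0 /m k1' subnn mul0n.
have : (e i0 * d i0 = 0)%N by apply/eqP; rewrite -leqn0 -E0; exact: tmax.
move/eqP; rewrite muln_eq0 eqn0Ngt he //= => /eqP d0.
by apply: degD0; [apply: hy | exact: d0].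
Qed.


Lemma kernel_fc x y : R x -> R y -> x != 0 -> y != 0 -> D (x * y) = 0 -> D x = 0 /\ D y = 0.
Proof.
move=> hx hy nx ny h.
have [p hp] := deg_exists hx nx; have [q hq] := deg_exists hy ny.
have h1 := isdegM hx hy hp hq.
have h2 := isdeg_const h (mulf_neq0 nx ny).
have := isdeg_uniq h1 h2 => /eqP; rewrite addn_eq0 => /andP [/eqP p0 /eqP q0].
by split; apply: isdeg0D; [rewrite -p0 | rewrite -q0].
Qed.

End Basics.


Lemma char0_of (B : idomainType) : [pchar B] =i pred0 -> forall m, (m%:R == 0 :> B) = (m == 0)%N.
Proof. by move=> h; apply/pcharf0P. Qed.

Lemma apply_core (B : idomainType) (R : B -> Prop) (D : B -> B) (hR : is_subring R)
  (hD : is_LND_on R D) (hc : forall m, (m%:R == 0 :> B) = (m == 0)%N)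
  (hF : factorially_closed R) n (y : 'I_n -> B) (a : 'I_n -> nat)
  (ha : forall i, (0 < a i)%N) (hn : (3 <= n)%N) (h1 : \sum_(i < n) y i ^+ a i = 0)
  (h2 : \sum_(i < n) ((a i)%:R : rat)^-1 <= ((n - 2)%:R : rat)^-1)
  (hy : forall i, R (y i)) (hcop : forall i j, i != j -> cop (y i) (y j)) :
  forall i, D (y i) = 0.
Proof.
move=> i.
apply: (@core B R hR D hD hc hF 'I_n n [set: 'I_n] y a (fun _ => 1)
   (fun i => ((a i)%:R : rat)^-1)) => //.
- by rewrite cardsT card_ord.
- move=> j _; split => /=; [exact: R1 hR | exact (@D1 B R hR D hD) | exact: oner_neq0].
- by move=> j k _ _; apply: hcop.
- by move=> j _; rewrite invr_ge0 ler0n.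
- by move=> j _; right; rewrite divff // pnatr_eq0 -lt0n ha.
- rewrite cardsT card_ord.
  have -> : \sum_(j in [set: 'I_n]) ((a j)%:R : rat)^-1 = \sum_j ((a j)%:R : rat)^-1.
    by apply: eq_bigl => j; rewrite inE.
  have n2 : 0 < ((n - 2)%:R : rat) by rewrite ltr0n subn_gt0.
  apply: le_trans (ler_wpM2l (ltW n2) h2) _.
  by rewrite mulfV ?gt_eqF.
- by rewrite -[RHS]h1; apply: eq_big => [j|j _]; rewrite ?inE ?mul1r.
Qed.

Lemma cop_lift (B : idomainType) (N : nat) (u v : B) :
  (forall z : B, (exists a, z = u * a) -> (exists b, z = v * b) -> exists c, z = u * v * c) ->
  cop (u%:MP : {mpoly B[N]}) (v%:MP).
Proof.
move=> h z [a ea] [b eb].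
have ex : forall m, exists c, z@_m = u * v * c.
  by move=> m; apply: h; [exists a@_m; rewrite ea mcoeffCM | exists b@_m; rewrite eb mcoeffCM].
pose g := fun m => epsilon (inhabits 0) (fun c => z@_m = u * v * c).
have hg : forall m, z@_m = u * v * g m by move=> m; apply: (epsilon_spec (inhabits 0) _ (ex m)).
exists (\sum_(m <- msupp z) g m *: 'X_[m]).
rewrite -rmorphM mul_mpolyC scaler_sumr {1}(mpolyE z); apply: eq_bigr => m _.
by rewrite scalerA -hg.
Qed.

Unset Implicit Arguments.

Theorem theorem6p7 (B : idomainType) (hchar : [pchar B] =i pred0)
    (n : nat) (hn : (3 <= n)%N) (x : 'I_n -> B) (a : 'I_n -> nat)
    (ha : forall i, (0 < a i)%N)
    (h1 : \sum_(i < n) x i ^+ a i = 0)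
    (h2 : \sum_(i < n) ((a i)%:R : rat)^-1 <= ((n - 2)%:R : rat)^-1)
    (h3 : forall i j : 'I_n, i != j -> rel_prime (x i) (x j)) :
  (forall R : B -> Prop, is_subring R -> factorially_closed R ->
     (forall i, R (x i)) -> forall i, ML_on R (x i))
  /\ (forall (N : nat) (i : 'I_n), ML ((x i)%:MP : {mpoly B[N]}))
  /\ (forall i, rigid_core (x i)).
Proof.
have hcB := char0_of hchar.
have copB : forall i j, i != j -> cop (x i) (x j).
  move=> i j ne z hx hy; have [h _] := h3 i j ne; exact: ((h z).1 (conj hx hy)).
have partA : forall R : B -> Prop, is_subring R -> factorially_closed R ->
     (forall i, R (x i)) -> forall i, ML_on R (x i).
  move=> R hR hF hx i; split; first exact: hx.
  by move=> D hD; apply: (apply_core hR hD hcB hF ha hn h1 h2 hx copB).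
split; [exact: partA | split].
- move=> N i; split => // D hD.
  pose y := fun j => ((x j)%:MP : {mpoly B[N]}).
  have hR : is_subring (fun _ : {mpoly B[N]} => True) by [].
  have hF : factorially_closed (fun _ : {mpoly B[N]} => True) by [].
  have hc : forall m, (m%:R == 0 :> {mpoly B[N]}) = (m == 0)%N.
    by move=> m; rewrite -mpolyC_nat mpolyC_eq0 hcB.
  have h1' : \sum_(j < n) y j ^+ a j = 0.
    rewrite /y; transitivity ((\sum_(j < n) x j ^+ a j)%:MP : {mpoly B[N]}); last by rewrite h1 raddf0.
    by rewrite rmorph_sum; apply: eq_bigr => j _; rewrite rmorphXn.
  have hcop : forall j k, j != k -> cop (y j) (y k).
    by move=> j k ne; apply: cop_lift; apply: copB.
  exact: (apply_core hR hD hc hF ha hn h1' h2 (fun _ => I) hcop i).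
- have key : forall k, [/\ is_subring (@ML_iter B k), factorially_closed (@ML_iter B k)
      & forall j, @ML_iter B k (x j)].
    elim=> [|k [hR hF hx]]; first by split.
    have hsub : is_subring (@ML_iter B k.+1).
      split.
      + by split; [case: hR | move=> D hD; exact (@D0 _ _ hR D hD)].
      + by split; [case: hR | move=> D hD; exact (@D1 _ _ hR D hD)].
      + move=> u v [hu Du] [hv Dv]; split; first by case: hR => _ _ h _; apply: h.
        by move=> D hD; rewrite (DB hR hD hu hv) Du // Dv // subrr.
      + move=> u v [hu Du] [hv Dv]; split; first by case: hR => _ _ _ h; apply: h.
        by move=> D hD; rewrite (DM hD hu hv) Du // Dv // !mulr0 addr0.
    split => //.
      move=> u v nu nv [huv Duv]; have [hu hv] := hF u v nu nv huv.
      split; split => // D hD; have [] := kernel_fc hR hD hcB hu hv nu nv (Duv D hD) => //.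
    by move=> j; apply: partA.
  by move=> i k; case: (key k) => _ _; apply.
Qed.
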